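(* Let $p$ be an odd prime and $m$ a positive integer not divisible by $p$. Then for every $r\in\mathbb Z$, $$\sum_{\substack{k=1\\ k\equiv r\ (\mathrm{mod}\ m)}}^{p-1}\frac1k\equiv\frac1m\Big(B_{p-1}\Big(\Big\{\frac rm\Big\}\Big)-B_{p-1}\Big(\Big\{\frac{r-p}m\Big\}\Big)\Big)\pmod p.$$
   Context: $\{x\}$ denotes the fractional part of a real number $x$; $B_n(x)$ is the $n$th Bernoulli polynomial. Congruences modulo $p$ are between rational numbers whose denominators are prime to $p$. *)

(* Defs.v *)
From HB Require Import structures.
From mathcomp Require Import all_boot all_order all_algebra.
Set Implicit Arguments. Unset Strict Implicit. Unset Printing Implicit Defensive.
Import Order.TTheory GRing.Theory Num.Theory.
Local Open Scope ring_scope.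

(* Bernoulli numbers B_0, ..., B_n (convention B_1 = -1/2), via the recursion
   B_0 = 1, sum_{k=0}^{n} C(n+1,k) B_k = 0 for n >= 1. *)
Fixpoint bern_list (n : nat) : seq rat :=
  match n with
  | 0%N => [:: 1]
  | n'.+1 => let s := bern_list n' in
      rcons s (- (n'.+2%:R)^-1 * \sum_(0 <= k < n'.+1) ('C(n'.+2, k))%:R * s`_k)
  end.

Definition bernoulli (n : nat) : rat := (bern_list n)`_n.

Definition bernoulli_poly (n : nat) : {poly rat} :=
  \sum_(0 <= k < n.+1) (('C(n, k))%:R * bernoulli k) *: 'X^(n - k).

Definition fracp (x : rat) : rat := x - (Num.floor x)%:~R.

Definition rat_congr (p : nat) (a b : rat) : Prop :=
  [/\ (~~ ((p%:Z) %| denq a)%Z), (~~ ((p%:Z) %| denq b)%Z) & ((p%:Z) %| numq (a - b))%Z].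

(* Main.v *)
Require Import Defs.
From HB Require Import structures.
From mathcomp Require Import all_boot all_order all_algebra.
From mathcomp Require Import ring lra zify.
Import Order.TTheory GRing.Theory Num.Theory.
Local Open Scope ring_scope.
Lemma modwin (r : int) (m a k : nat) : (0 < m)%N -> (a <= k < a + m)%N ->
  ((k%:Z == r %[mod m%:Z])%Z) = (k == a + absz ((r - a%:Z) %% m%:Z)%Z)%N.
Proof.
move=> m0 hk.
have m0' : m%:Z != 0 by lia.
have e := divz_eq (r - a%:Z) m%:Z.
have s0 := modz_ge0 (r - a%:Z) m0'.
have s1 : (((r - a%:Z) %% m%:Z)%Z < m%:Z)%R by apply: ltz_pmod; lia.
rewrite eqz_mod_dvd.
set s := ((r - a%:Z) %% m%:Z)%Z in e s0 s1 *.
set q := ((r - a%:Z) %/ m%:Z)%Z in e.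
have -> : ((k == a + absz s)%N) = (k%:Z == a%:Z + s).
  by apply/eqP/eqP; lia.
apply/dvdzP/eqP => [[t ht]|->].
  have h : (k%:Z - a%:Z - s = (t + q) * m%:Z) by rewrite mulrDl -ht; lia.
  have hd : t + q = 0.
    case: (ltrgtP (t + q) 0) => // hd.
      have : (t + q) * m%:Z <= - m%:Z.
        by rewrite -mulN1r ler_wpM2r //; lia.
      lia.
    have : m%:Z <= (t + q) * m%:Z.
      by rewrite -{1}(mul1r m%:Z) ler_wpM2r //; lia.
    lia.
  by move: h; rewrite hd mul0r; lia.
exists (-q); lia.
Qed.

Lemma telescope (P : pred nat) (f : nat -> rat) (m N : nat) :
  (0 < m)%N -> (forall k, P (k + m)%N = P k) ->
  \sum_(0 <= k < N | P k) (f (k + m)%N - f k) =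
  \sum_(N <= k < N + m | P k) f k - \sum_(0 <= k < m | P k) f k.
Proof.
move=> m0 hP; elim: N => [|N ih]; first by rewrite big_geq // add0n subrr.
have e1 : \sum_(N <= k < N + m | P k) f k =
    (if P N then f N else 0) + \sum_(N.+1 <= k < N + m | P k) f k.
  rewrite big_mkcond big_ltn /=; last lia.
  by rewrite [in RHS]big_mkcond.
have e2 : \sum_(N.+1 <= k < N.+1 + m | P k) f k =
    \sum_(N.+1 <= k < N + m | P k) f k + (if P (N + m)%N then f (N + m)%N else 0).
  rewrite big_mkcond addSn big_nat_recr /=; last lia.
  by rewrite [in RHS]big_mkcond.
rewrite big_mkcond big_nat_recr //=.
rewrite -(big_mkcond P) ih e1 e2 hP.
by case: (P N); rewrite ?addr0; ring.
Qed.

Lemma window (r : int) (m a : nat) (f : nat -> rat) : (0 < m)%N ->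
  \sum_(a <= k < a + m | (k%:Z == r %[mod m%:Z])%Z) f k =
  f (a + absz ((r - a%:Z) %% m%:Z)%Z)%N.
Proof.
move=> m0.
have m0' : m%:Z != 0 by lia.
have s0 := modz_ge0 (r - a%:Z) m0'.
have s1 : (((r - a%:Z) %% m%:Z)%Z < m%:Z)%R by apply: ltz_pmod; lia.
set c := (a + absz ((r - a%:Z) %% m%:Z)%Z)%N.
have hc1 : (a <= c)%N by rewrite /c; lia.
have hc2 : (c < a + m)%N by rewrite /c; lia.
rewrite big_nat_cond (eq_bigl (fun k => k == c)) => [|k].
  by rewrite big_nat1_eq hc1 hc2.
case hk: (a <= k < a + m)%N => /=; first by rewrite (modwin _ _ _ _ m0 hk).
by apply/esym/negbTE; apply: contraFN hk => /eqP->; rewrite hc1 hc2.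
Qed.


Section PInt.
Variable p : nat.
Hypothesis pr : prime p.

Definition pint (a : rat) := ~~ (p%:Z %| denq a)%Z.
Definition pzero (a : rat) := pint a && (p%:Z %| numq a)%Z.

Lemma coprime_pz {v : int} : ~~ (p%:Z %| v)%Z -> coprimez p%:Z v.
Proof. by move=> h; rewrite coprimezE /= prime_coprime // -dvdzE. Qed.

Lemma pdvd_mul (u v : int) : (p%:Z %| u * v)%Z -> (p%:Z %| u)%Z || (p%:Z %| v)%Z.
Proof.
move=> h; case: (boolP (p%:Z %| v)%Z) => hv; first by rewrite orbT.
by rewrite -(Gauss_dvdzl u (coprime_pz hv)) h.
Qed.

Lemma num_den_cross {a : rat} {u v : int} : v != 0 -> a = u%:~R / v%:~R ->
  numq a * v = u * denq a.
Proof.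
move=> v0 ha; apply: (@intr_inj rat); rewrite !intrM.
have d0 : (denq a)%:~R != 0 :> rat by rewrite intr_eq0 denq_neq0.
have v0' : v%:~R != 0 :> rat by rewrite intr_eq0.
have e : (numq a)%:~R / (denq a)%:~R = u%:~R / v%:~R :> rat by rewrite divq_num_den.
by apply/eqP; rewrite -eqr_div // e.
Qed.

Lemma pintP {a : rat} {u v : int} : ~~ (p%:Z %| v)%Z -> a = u%:~R / v%:~R -> pint a.
Proof.
move=> hv ha; have v0 : v != 0 by apply: contra hv => /eqP->; rewrite dvdz0.
have e := num_den_cross v0 ha.
apply: contra hv => hd.
have : (denq a %| v)%Z.
  have cop : coprimez (denq a) (numq a).
    by rewrite coprimez_sym coprimezE coprime_num_den.
  by rewrite -(Gauss_dvdzr _ cop) e dvdz_mull.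
exact: dvdz_trans.
Qed.

Lemma pzeroP {a : rat} {u v : int} : (p%:Z %| u)%Z -> ~~ (p%:Z %| v)%Z ->
  a = u%:~R / v%:~R -> pzero a.
Proof.
move=> hu hv ha; rewrite /pzero (pintP hv ha) /=.
have v0 : v != 0 by apply: contra hv => /eqP->; rewrite dvdz0.
have e := num_den_cross v0 ha.
have : (p%:Z %| numq a * v)%Z by rewrite e dvdz_mulr.
by move/pdvd_mul; rewrite (negbTE hv) orbF.
Qed.

Lemma pint_repr {a : rat} : pint a -> a = (numq a)%:~R / (denq a)%:~R.
Proof. by rewrite divq_num_den. Qed.

Lemma pzero_pint a : pzero a -> pint a.
Proof. by case/andP. Qed.

Lemma pnot_mul (v w : int) : ~~ (p%:Z %| v)%Z -> ~~ (p%:Z %| w)%Z -> ~~ (p%:Z %| v * w)%Z.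
Proof. by move=> hv hw; apply/negP => /pdvd_mul; rewrite (negbTE hv) (negbTE hw). Qed.

Lemma nz_of {v : int} : ~~ (p%:Z %| v)%Z -> v%:~R != 0 :> rat.
Proof. by move=> hv; rewrite intr_eq0; apply: contra hv => /eqP->; rewrite dvdz0. Qed.

Lemma pintD a b : pint a -> pint b -> pint (a + b).
Proof.
move=> ha hb; apply: (@pintP _ (numq a * denq b + numq b * denq a) (denq a * denq b)).
  exact: pnot_mul.
rewrite {1}(pint_repr ha) {1}(pint_repr hb).
have := nz_of ha; have := nz_of hb => ? ?.
rewrite intrD !intrM; field; apply/andP; split => //.
Qed.

Lemma pintM a b : pint a -> pint b -> pint (a * b).
Proof.
move=> ha hb; apply: (@pintP _ (numq a * numq b) (denq a * denq b)).
  exact: pnot_mul.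
rewrite {1}(pint_repr ha) {1}(pint_repr hb).
have := nz_of ha; have := nz_of hb => ? ?.
rewrite !intrM; field; apply/andP; split => //.
Qed.

Lemma pintN a : pint a -> pint (- a).
Proof.
move=> ha; apply: (@pintP _ (- numq a) (denq a)) => //.
by rewrite {1}(pint_repr ha) intrN mulNr.
Qed.

Lemma pintB a b : pint a -> pint b -> pint (a - b).
Proof. by move=> ha hb; apply: pintD => //; apply: pintN. Qed.

Lemma pint_int (z : int) : pint z%:~R.
Proof. by apply: (@pintP _ z 1); rewrite ?dvdz1 ?divr1 //; case: (p) pr => [|[]]. Qed.

Lemma pint_nat (k : nat) : pint k%:R.
Proof. by have := pint_int k; rewrite -pmulrn. Qed.

Lemma pint_inv_int (z : int) : ~~ (p%:Z %| z)%Z -> pint (z%:~R)^-1.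
Proof. by move=> h; apply: (@pintP _ 1 z) => //; rewrite mul1r. Qed.

Lemma pintX a k : pint a -> pint (a ^+ k).
Proof.
move=> ha; elim: k => [|k ih]; last by rewrite exprS pintM.
by rewrite expr0; have := pint_int 1.
Qed.

Lemma pint_sum (I : Type) (r : seq I) (P : pred I) (F : I -> rat) :
  (forall i, P i -> pint (F i)) -> pint (\sum_(i <- r | P i) F i).
Proof.
move=> h; apply: (big_ind pint) => //; first by have := pint_int 0.
exact: pintD.
Qed.

Lemma pzeroD a b : pzero a -> pzero b -> pzero (a + b).
Proof.
move=> /andP[ha na] /andP[hb nb].
apply: (@pzeroP _ (numq a * denq b + numq b * denq a) (denq a * denq b)).
- by rewrite rpredD // dvdz_mulr.
- exact: pnot_mul.
rewrite {1}(pint_repr ha) {1}(pint_repr hb).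
have := nz_of ha; have := nz_of hb => ? ?.
rewrite intrD !intrM; field; apply/andP; split => //.
Qed.

Lemma pzeroM a b : pint a -> pzero b -> pzero (a * b).
Proof.
move=> ha /andP[hb nb].
apply: (@pzeroP _ (numq a * numq b) (denq a * denq b)).
- by rewrite dvdz_mull.
- exact: pnot_mul.
rewrite {1}(pint_repr ha) {1}(pint_repr hb).
have := nz_of ha; have := nz_of hb => ? ?.
rewrite !intrM; field; apply/andP; split => //.
Qed.

Lemma pzeroN a : pzero a -> pzero (- a).
Proof.
move=> /andP[ha na]; apply: (@pzeroP _ (- numq a) (denq a)) => //.
  by rewrite rpredN.
by rewrite {1}(pint_repr ha) intrN mulNr.
Qed.

Lemma pzero0 : pzero 0.
Proof. by apply: (@pzeroP _ 0 1); rewrite ?dvdz0 ?dvdz1 ?mul0r //; case: (p) pr => [|[]]. Qed.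

Lemma pzero_sum (I : Type) (r : seq I) (P : pred I) (F : I -> rat) :
  (forall i, P i -> pzero (F i)) -> pzero (\sum_(i <- r | P i) F i).
Proof. by move=> h; apply: (big_ind pzero) => //; [exact: pzero0 | exact: pzeroD]. Qed.

End PInt.


Lemma size_bern n : size (bern_list n) = n.+1.
Proof. by elim: n => [|n ih] //=; rewrite size_rcons ih. Qed.

Lemma bern_prefix n k : (k <= n)%N -> (bern_list n.+1)`_k = (bern_list n)`_k.
Proof. by move=> hk /=; rewrite nth_rcons size_bern ltnS hk. Qed.

Lemma bern_nth n k : (k <= n)%N -> (bern_list n)`_k = bernoulli k.
Proof.
elim: n => [|n ih]; first by rewrite leqn0 => /eqP->.
rewrite leq_eqVlt => /orP[/eqP->//|]; rewrite ltnS => hk.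
by rewrite bern_prefix // ih.
Qed.

Lemma bernS n : bernoulli n.+1 =
  - (n.+2%:R)^-1 * \sum_(0 <= k < n.+1) ('C(n.+2, k))%:R * bernoulli k.
Proof.
rewrite /bernoulli /= nth_rcons size_bern ltnn eqxx; congr (_ * _).
by apply: eq_big_nat => k /andP[_ hk]; rewrite bern_nth.
Qed.

Lemma bern0 : bernoulli 0 = 1. Proof. by []. Qed.

Lemma bernG N : \sum_(0 <= k < N) ('C(N, k))%:R * bernoulli k = (N == 1%N)%:R.
Proof.
case: N => [|[|n]]; first by rewrite big_geq.
  by rewrite big_nat1 bin0 bern0 mulr1.
rewrite big_nat_recr //= bernS binSn mulrA mulrN mulfV ?mulN1r ?subrr //.
by rewrite pnatr_eq0.
Qed.

Local Open Scope nat_scope.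

Lemma bin_swap n k j : 'C(n, k) * 'C(n - k, j) = 'C(n, j) * 'C(n - j, k).
Proof.
case: (leqP (k + j) n) => hkj; last first.
  have L : 'C(n, k) * 'C(n - k, j) = 0.
    case: (leqP k n) => hk; last by rewrite bin_small.
    by rewrite (@bin_small (n - k) j) ?muln0 //; lia.
  have R : 'C(n, j) * 'C(n - j, k) = 0.
    case: (leqP j n) => hj; last by rewrite bin_small.
    by rewrite (@bin_small (n - j) k) ?muln0 //; lia.
  by rewrite L R.
have hk : k <= n by lia.
have hj : j <= n by lia.
have h1 := bin_fact hk.
have h2 : 'C(n - k, j) * (j`! * (n - k - j)`!) = (n - k)`! by apply: bin_fact; lia.
have h3 := bin_fact hj.
have h4 : 'C(n - j, k) * (k`! * (n - j - k)`!) = (n - j)`! by apply: bin_fact; lia.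
have e : n - j - k = n - k - j by lia.
rewrite e in h4.
apply/eqP; rewrite -(@eqn_pmul2r (k`! * j`! * (n - k - j)`!)); last by rewrite !muln_gt0 !fact_gt0.
apply/eqP.
transitivity (n`!).
  by rewrite -h1 -h2; ring.
by rewrite -h3 -h4; ring.
Qed.
Local Open Scope ring_scope.


Definition Pev n (x : rat) := (bernoulli_poly n).[x].

Lemma PevE n x : Pev n x =
  \sum_(0 <= k < n.+1) ('C(n, k)%:R * bernoulli k) * x ^+ (n - k).
Proof.
rewrite /Pev /bernoulli_poly horner_sum; apply: eq_bigr => k _.
by rewrite hornerZ hornerXn.
Qed.

Lemma PevE' n x : Pev n x =
  \sum_(0 <= j < n.+1) ('C(n, j)%:R * bernoulli (n - j)) * x ^+ j.
Proof.
rewrite PevE big_nat_rev /=; apply: eq_big_nat => j /andP[_ hj].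
rewrite add0n subSS subKn // bin_sub //.
Qed.

Lemma expD1_ext (x : rat) N M : (N <= M)%N ->
  (x + 1) ^+ N = \sum_(0 <= j < M.+1) 'C(N, j)%:R * x ^+ j.
Proof.
move=> hNM; rewrite exprD1n (big_cat_nat (n := N.+1)) //=.
rewrite [X in _ + X]big1_seq ?addr0; last first.
  move=> j /andP[_]; rewrite mem_index_iota => /andP[hj _].
  by rewrite bin_small // mul0r.
by rewrite big_mkord; apply: eq_bigr => j _; rewrite mulr_natl.
Qed.

Lemma Pdiff n x : (0 < n)%N -> Pev n (x + 1) - Pev n x = n%:R * x ^+ n.-1.
Proof.
move=> n0.
have E1 : Pev n (x + 1) = \sum_(0 <= j < n.+1) x ^+ j *
     ('C(n, j)%:R * \sum_(0 <= k < n.+1) 'C(n - j, k)%:R * bernoulli k).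
  rewrite PevE.
  under eq_big_nat => k /andP[_ hk].
    rewrite (@expD1_ext x (n - k) n) ?leq_subr // big_distrr /=.
  over.
  rewrite /= exchange_big_nat /=; apply: eq_big_nat => j _.
  rewrite big_distrr big_distrr /=; apply: eq_big_nat => k _.
  have := bin_swap n k j => /(congr1 (fun t => t%:R : rat)); rewrite !natrM => e.
  transitivity (('C(n, k)%:R * 'C(n - k, j)%:R) * bernoulli k * x ^+ j); first by ring.
  by rewrite e; ring.
have E2 : forall j, (j <= n)%N ->
    \sum_(0 <= k < n.+1) 'C(n - j, k)%:R * bernoulli k =
    ((n - j)%N == 1%N)%:R + bernoulli (n - j).
  move=> j hj; rewrite (big_cat_nat (n := (n - j).+1)) //=; last by rewrite ltnS leq_subr.
  rewrite [X in _ + X]big1_seq ?addr0; last first.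
    move=> k /andP[_]; rewrite mem_index_iota => /andP[hk _].
    by rewrite bin_small // mul0r.
  by rewrite big_nat_recr //= bernG binn mul1r.
rewrite E1 PevE' -sumrB.
have -> : \sum_(0 <= i < n.+1) (x ^+ i * ('C(n, i)%:R *
      \sum_(0 <= k < n.+1) 'C(n - i, k)%:R * bernoulli k) -
     'C(n, i)%:R * bernoulli (n - i) * x ^+ i) =
   \sum_(0 <= i < n.+1) ('C(n, i)%:R * ((n - i)%N == 1%N)%:R) * x ^+ i.
  apply: eq_big_nat => i /andP[_ hi]; rewrite E2 //; ring.
case: n n0 E1 E2 => // n _ _ _.
rewrite big_nat_recr //= subnn mulr0 mul0r addr0.
rewrite big_nat_recr //= subSn // subnn eqxx mulr1 binSn.
rewrite big1_seq ?add0r //.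
move=> i /andP[_]; rewrite mem_index_iota => /andP[_ hi].
have -> : ((n.+1 - i)%N == 1%N) = false by apply/negbTE; lia.
by rewrite mulr0 mul0r.
Qed.


Section S.
Variable p : nat.
Hypothesis pr : prime p.

Lemma pint_inv_nat k : ~~ (p %| k)%N -> pint p (k%:R)^-1.
Proof.
move=> h; apply: (@pintP p _ 1 k); first by rewrite dvdzE.
by rewrite mul1r -pmulrn.
Qed.

Lemma pint_bern k : (k.+1 < p)%N -> pint p (bernoulli k).
Proof.
elim/ltn_ind: k => -[|n] ih hk.
  by rewrite bern0; have := pint_int p pr 1.
rewrite bernS; apply: pintM => //.
  apply: pintN => //; apply: pint_inv_nat.
  by apply/negP => /dvdn_leq => /(_ isT); lia.
rewrite big_nat_cond; apply: pint_sum => // k; rewrite andbT => /andP[_ hkn].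
apply: pintM => //; first exact: pint_nat.
by apply: ih => //; lia.
Qed.

Lemma powdiff y z j : pint p y -> pint p z ->
  pint p (y ^+ j - z ^+ j) /\ (pzero p (y - z) -> pzero p (y ^+ j - z ^+ j)).
Proof.
move=> hy hz; elim: j => [|j [ih1 ih2]].
  by rewrite !expr0 subrr; split; [apply: pzero_pint; exact: pzero0 p pr | move=> _; exact: pzero0].
have -> : y ^+ j.+1 - z ^+ j.+1 = y * (y ^+ j - z ^+ j) + (y - z) * z ^+ j
  by rewrite !exprS; ring.
split.
  by apply: pintD => //; apply: pintM => //; [exact: pintB | exact: pintX].
move=> h0; apply: pzeroD => //; first by apply: pzeroM => //; exact: ih2.
by rewrite mulrC; apply: pzeroM => //; exact: pintX.
Qed.

Lemma PevB n y z : (n.+1 <= p)%N -> pint p y -> pint p z ->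
  pint p (Pev n y - Pev n z) /\ (pzero p (y - z) -> pzero p (Pev n y - Pev n z)).
Proof.
move=> hn hy hz.
rewrite !PevE -sumrB big_nat_recr //= subnn !expr0 subrr addr0.
have key : forall k, (0 <= k < n)%N ->
  ('C(n, k)%:R * bernoulli k) * y ^+ (n - k) - ('C(n, k)%:R * bernoulli k) * z ^+ (n - k)
  = ('C(n, k)%:R * bernoulli k) * (y ^+ (n - k) - z ^+ (n - k)).
  by move=> k _; ring.
rewrite (eq_big_nat _ _ key).
have hc : forall k, (0 <= k < n)%N -> pint p ('C(n, k)%:R * bernoulli k).
  move=> k /andP[_ hk]; apply: pintM => //; first exact: pint_nat.
  by apply: pint_bern; lia.
split.
  rewrite big_nat_cond; apply: pint_sum => // k; rewrite andbT => hk.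
  by apply: pintM => //; [exact: hc | exact: (powdiff _ _ _ hy hz).1].
move=> h0; rewrite big_nat_cond; apply: pzero_sum => // k; rewrite andbT => hk.
by apply: pzeroM => //; [exact: hc | exact: (powdiff _ _ _ hy hz).2].
Qed.

End S.


Lemma natzR (n : nat) : (n%:Z)%:~R = n%:R :> rat. Proof. by []. Qed.

Lemma fracpE (z : int) (m : nat) : (0 < m)%N ->
  fracp (z%:~R / m%:R) = ((z %% m%:Z)%Z)%:~R / m%:R.
Proof.
move=> m0.
have m0' : m%:Z != 0 by lia.
have mr : (m%:R : rat) != 0 by rewrite pnatr_eq0 -lt0n.
have s0 := modz_ge0 z m0'.
have s1 : ((z %% m%:Z)%Z < m%:Z)%R by apply: ltz_pmod; lia.
have e : z%:~R / m%:R = ((z %/ m%:Z)%Z)%:~R + ((z %% m%:Z)%Z)%:~R / m%:R :> rat.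
  rewrite {1}(divz_eq z m%:Z) intrD intrM natzR; field; exact: mr.
rewrite /fracp (@floor_def _ _ (z %/ m%:Z)%Z) e; first by rewrite addrAC subrr add0r.
have h0 : 0 <= ((z %% m%:Z)%Z)%:~R / m%:R :> rat.
  by rewrite divr_ge0 ?ler0z ?ler0n.
have h1 : ((z %% m%:Z)%Z)%:~R / m%:R < 1 :> rat.
  rewrite ltr_pdivrMr ?ltr0n // mul1r -natzR ltr_int //.
by rewrite intrD; apply/andP; split; lra.
Qed.


Lemma PoszX (k n : nat) : (k%:Z) ^+ n = (k ^ n)%N%:Z.
Proof. by rewrite -!natz natrX. Qed.

Lemma fermat_dvd (p k : nat) : prime p -> ~~ (p %| k)%N ->
  (p%:Z %| (k%:Z) ^+ p.-1 - 1)%Z.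
Proof.
move=> pr hk.
have k0 : (0 < k)%N by rewrite lt0n; apply: contra hk => /eqP->; rewrite dvdn0.
have h := fermat_little k pr.
have pe : p = p.-1.+1 by rewrite prednK // prime_gt0.
have k1 : (1 <= k ^ p.-1)%N by rewrite expn_gt0 k0.
have hd : (p %| k ^ p.-1 - 1)%N.
  move: h; rewrite {1}pe expnS => /eqP.
  rewrite -[X in _ == X %[mod _]](muln1 k) eqn_mod_dvd; last by rewrite leq_mul2l k1 orbT.
  by rewrite -mulnBr Gauss_dvdr // prime_coprime.
by rewrite PoszX subzn // dvdzE /= absz_nat.
Qed.

Lemma abszR (s : int) : (0 <= s)%R -> (absz s)%:R = s%:~R :> rat.
Proof. by move=> h; rewrite -natzR abszE ger0_norm. Qed.

Theorem theorem2p1 (p m : nat) (r : int) :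
  prime p -> odd p -> (0 < m)%N -> ~~ (p %| m)%N ->
  rat_congr p
    (\sum_(1 <= k < p | ((k%:Z) == r %[mod m%:Z])%Z) (k%:R : rat)^-1)
    ((m%:R)^-1 * ((bernoulli_poly p.-1).[fracp (r%:~R / m%:R)]
                  - (bernoulli_poly p.-1).[fracp ((r - p%:Z)%:~R / m%:R)])).
Proof.
move=> pr podd m0 pm.
have p2 : (2 < p)%N.
  have := prime_gt1 pr; rewrite leq_eqVlt => /orP[/eqP e|//].
  by rewrite -e in podd.
set n := p.-1.
have pe : p = n.+1 by rewrite /n prednK // prime_gt0.
have n2 : (2 <= n)%N by rewrite /n; lia.
have pn : ~~ (p %| n)%N by apply/negP => /dvdn_leq; rewrite /n; lia.
have mr : (m%:R : rat) != 0 by rewrite pnatr_eq0 -lt0n.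
have nr : (n%:R : rat) != 0 by rewrite pnatr_eq0; lia.
have pmZ : ~~ (p%:Z %| m%:Z)%Z by rewrite dvdzE.
have pnZ : ~~ (p%:Z %| n%:Z)%Z by rewrite dvdzE.
change (bernoulli_poly n).[?a] with (Pev n a).
set P := fun k : nat => ((k%:Z) == r %[mod m%:Z])%Z.
set Q := fun k : nat => Pev n (k%:R / m%:R).
set K := (m%:R ^+ n.-1 / n%:R : rat).
set x := fracp (r%:~R / m%:R).
set y := fracp ((r - p%:Z)%:~R / m%:R).
set S := \sum_(1 <= k < p | _) _.
set R := _ * _.
have hS0 : S = \sum_(0 <= k < p | P k) (k%:R : rat)^-1.
  rewrite (big_ltn_cond (m := 0)) /=; last lia.
  by case: (P 0); rewrite ?invr0 ?add0r.
have hP : forall k, P (k + m)%N = P k.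
  by move=> k; rewrite /P PoszD modzDr.
have hT : \sum_(0 <= k < p | P k) (Q (k + m)%N - Q k) =
    Pev n (p%:R / m%:R + y) - Pev n x.
  rewrite (telescope P Q m p m0 hP) window //.
  have := window r m 0 Q m0; rewrite add0n => ->.
  rewrite /Q subr0 /x /y !fracpE //.
  have m0' : m%:Z != 0 by lia.
  rewrite natrD abszR ?modz_ge0 // abszR ?modz_ge0 // mulrDl.
  done.
have hterm : forall k, (k < p)%N ->
    pzero p ((k%:R : rat)^-1 - K * (Q (k + m)%N - Q k)).
  move=> k hk.
  have -> : Q (k + m)%N - Q k = n%:R * (k%:R / m%:R) ^+ n.-1.
    rewrite /Q -Pdiff; last lia.
    by rewrite natrD mulrDl divff.
  have -> : K * (n%:R * (k%:R / m%:R) ^+ n.-1) = (k%:R : rat) ^+ n.-1.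
    rewrite /K exprMn exprVn; field; rewrite nr /=.
    by rewrite expf_neq0.
  case: (posnP k) => [->|k0].
    by rewrite invr0 expr0n /= (_ : n.-1 == 0%N = false) ?subrr; [exact: pzero0 | lia].
  have pk : ~~ (p %| k)%N by apply/negP => /dvdn_leq; lia.
  apply: (@pzeroP p pr _ (1 - (k%:Z) ^+ n) k).
  - by rewrite -rpredN opprB fermat_dvd.
  - by rewrite dvdzE.
  have kr : (k%:R : rat) != 0 by rewrite pnatr_eq0; lia.
  rewrite intrB rmorphXn /= natzR.
  have -> : n = n.-1.+1 by lia.
  rewrite -pred_Sn exprS; field; done.
have h4 : pzero p (S - K * (Pev n (p%:R / m%:R + y) - Pev n x)).
  rewrite hS0 -hT big_distrr -sumrB big_nat_cond.
  by apply: pzero_sum => // k /andP[/andP[_ hk] _]; exact: hterm.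
have pintm : forall z : int, pint p (z%:~R / m%:R).
  by move=> z; apply: (@pintP p _ z m).
have hx : pint p x by rewrite /x fracpE.
have hy : pint p y by rewrite /y fracpE.
have hpm : pzero p (p%:R / m%:R) by apply: (@pzeroP p pr _ p m).
have hpy : pint p (p%:R / m%:R + y) by apply: pintD => //; exact: pzero_pint.
have hK : pint p K.
  by apply: pintM => //; [apply: pintX => //; exact: pint_nat | exact: pint_inv_nat].
have hKm : pzero p (K + (m%:R)^-1).
  apply: (@pzeroP p pr _ ((m%:Z) ^+ n - 1 + p%:Z) (n%:Z * m%:Z)).
  - by rewrite rpredD ?fermat_dvd // dvdzz.
  - exact: pnot_mul.
  rewrite intrD intrB intrM rmorphXn /= !natzR /K.
  have -> : p%:R = n%:R + 1 :> rat by rewrite pe -addn1 natrD.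
  have -> : n = n.-1.+1 by lia.
  rewrite -pred_Sn exprS; field.
  by rewrite mr nat1r pnatr_eq0.
have hnp : (n.+1 <= p)%N by rewrite pe.
have e1 := (@PevB p pr n _ _ hnp hpy hy).2.
have e2 := (@PevB p pr n _ _ hnp hy hx).1.
have hd : pzero p (p%:R / m%:R + y - y) by rewrite addrK.
have hSR : pzero p (S - R).
  have -> : S - R = (S - K * (Pev n (p%:R / m%:R + y) - Pev n x))
     + K * (Pev n (p%:R / m%:R + y) - Pev n y)
     + (K + (m%:R)^-1) * (Pev n y - Pev n x) by rewrite /R; ring.
  apply: pzeroD => //; first apply: pzeroD => //.
    by apply: pzeroM => //; apply: e1.
  by rewrite mulrC; apply: pzeroM => //; exact: e2.
have hR : pint p R.
  apply: pintM => //; first exact: pint_inv_nat.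
  by rewrite -opprB; apply: pintN.
have hS : pint p S.
  rewrite -(subrK R S); apply: pintD => //; exact: pzero_pint.
case/andP: hSR => _ hnum.
by split.
Qed.
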